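(* Let $q>1$ and let $\rho$ be a positive $2\pi$-periodic $C^2$ function with $(\ln\rho)''(t)<\sqrt{q}/(1+\sqrt{q})$ for all $t$; let $y(\theta)=\rho(\theta)(\cos\theta,\sin\theta)^T$, and let $\phi$ be a continuous function on $\mathbb{S}^1$. With the notation in the context, suppose there is a sequence of positive numbers $k_n\to\infty$ such that for every $\eta\in\mathbb{S}^1$ and every integer $N\ge0$, $$\sum_{j,l=1}^2\big(f_\eta^{j,l}\big)^N\frac{\phi(\mathcal{T}_{j,l}\eta+\delta_{l,2}\pi)\,\Psi_\eta^{j,l}}{|\det D^2\psi_\eta^{j,l}|^{1/2}}\,e^{\mathrm{i}\pi\frac{(-1)^l(1-(-1)^j)}{4}+\mathrm{i}k_n\psi_\eta^{j,l}}\longrightarrow0\quad(n\to\infty).$$ Let $\eta\in\mathbb{S}^1$ satisfy $\rho'(\theta_\eta+\pi)=0\neq\rho'(\theta_\eta)$. Then $\phi(\mathcal{T}_{1,1}\eta)=\phi(\mathcal{T}_{2,2}\eta+\pi)=0$. Moreover, $\phi(\theta_\eta)$ and $\phi(\theta_\eta+\pi)$ are either both zero or both nonzero.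
   Context: Identify $\mathbb{S}^1$ with $\mathbb{R}/(2\pi\mathbb{Z})$ via $\theta\mapsto(\cos\theta,\sin\theta)^T$; $\theta_\eta$ is the angle of $\eta$, and $x^\perp=(-x_2,x_1)^T$. For $\eta\in\mathbb{S}^1$ and $\xi=(\cos\theta_\xi,\sin\theta_\xi)$: $\psi_\eta(\theta,\theta_\xi)=(\sqrt{q}\eta+\xi)\cdot y(\theta)$, $\Psi_\eta(\theta,\theta_\xi)=-(\sqrt{q}\eta-\xi)\cdot y'(\theta)^\perp$, and $D^2\psi_\eta(\theta,\theta_\xi)=\begin{bmatrix}(\sqrt{q}\eta+\xi)\cdot y''(\theta)&\xi^\perp\cdot y'(\theta)\\ \xi^\perp\cdot y'(\theta)&-\xi\cdot y(\theta)\end{bmatrix}$. For $l\in\{1,2\}$ let $\eta_l=(-1)^{l-1}\eta$, $\theta_q=\arccos(1/\sqrt q)$, $h(\theta)=\frac{\sqrt q\sin\theta}{\sqrt q\cos\theta+1}$; the equation $(\ln\rho)'(\theta)=h(\theta-\theta_{\eta_l})$ has exactly two solutions in $\mathbb{R}/(2\pi\mathbb{Z})$: $\mathcal{T}_{1,l}\eta$ with $\theta-\theta_{\eta_l}\in(\theta_q-\pi,\pi-\theta_q)$ and $\mathcal{T}_{2,l}\eta$ with $\theta-\theta_{\eta_l}\in(\pi-\theta_q,\pi+\theta_q)$ (mod $2\pi$). Set $\{\Psi_\eta^{j,l},\psi_\eta^{j,l},D^2\psi_\eta^{j,l}\}=\{\Psi_\eta,\psi_\eta,D^2\psi_\eta\}(\mathcal{T}_{j,l}\eta,\mathcal{T}_{j,l}\eta+\delta_{l,2}\pi)$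 (these determinants are nonzero) and $f_\eta^{j,l}=\rho(\mathcal{T}_{j,l}\eta)\sin(\mathcal{T}_{j,l}\eta-\theta_\eta)$; $\delta_{l,2}$ is the Kronecker delta and $\phi$ is viewed as a function of the angle. *)

(* Defs.v *)
From Stdlib Require Import Reals Ratan ZArith.
From Coquelicot Require Import Coquelicot.
Open Scope R_scope.

Definition dot (a b : R * R) : R := fst a * fst b + snd a * snd b.
Definition perp (x : R * R) : R * R := (- snd x, fst x).
Definition unitv (t : R) : R * R := (cos t, sin t).
Definition vadd (a b : R * R) : R * R := (fst a + fst b, snd a + snd b).
Definition vsub (a b : R * R) : R * R := (fst a - fst b, snd a - snd b).
Definition vscal (c : R) (a : R * R) : R * R := (c * fst a, c * snd a).

Definition ycurve (rho : R -> R) (t : R) : R * R := (rho t * cos t, rho t * sin t).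
Definition ycurve' (rho : R -> R) (t : R) : R * R :=
  (Derive (fun s => rho s * cos s) t, Derive (fun s => rho s * sin s) t).
Definition ycurve'' (rho : R -> R) (t : R) : R * R :=
  (Derive_n (fun s => rho s * cos s) 2 t, Derive_n (fun s => rho s * sin s) 2 t).

(* eta = unitv th_eta, xi = unitv th_xi *)
Definition psi_eta (q : R) (rho : R -> R) (th_eta th th_xi : R) : R :=
  dot (vadd (vscal (sqrt q) (unitv th_eta)) (unitv th_xi)) (ycurve rho th).
Definition Psi_eta (q : R) (rho : R -> R) (th_eta th th_xi : R) : R :=
  - dot (vsub (vscal (sqrt q) (unitv th_eta)) (unitv th_xi)) (perp (ycurve' rho th)).
Definition detD2psi (q : R) (rho : R -> R) (th_eta th th_xi : R) : R :=
  let a := dot (vadd (vscal (sqrt q) (unitv th_eta)) (unitv th_xi)) (ycurve'' rho th) in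
  let b := dot (perp (unitv th_xi)) (ycurve' rho th) in
  let d := - dot (unitv th_xi) (ycurve rho th) in
  a * d - b * b.

Definition theta_q (q : R) : R := acos (1 / sqrt q).
Definition hq (q : R) (t : R) : R := sqrt q * sin t / (sqrt q * cos t + 1).

Definition delta2 (l : nat) : R := if Nat.eqb l 2 then 1 else 0.
(* angle of eta_l = (-1)^(l-1) eta *)
Definition theta_eta_l (l : nat) (th_eta : R) : R := th_eta + delta2 l * PI.

Definition in_mod2pi (x a b : R) : Prop :=
  exists m : Z, a < x - 2 * PI * IZR m < b.

(* T j l th_eta is (an angle representing) T_{j,l} eta, eta = unitv th_eta *)
Definition is_T (q : R) (rho : R -> R) (T : nat -> nat -> R -> R) : Prop :=
  forall (th_eta : R) (l : nat), (l = 1%nat \/ l = 2%nat) ->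
    (Derive (fun s => ln (rho s)) (T 1%nat l th_eta)
       = hq q (T 1%nat l th_eta - theta_eta_l l th_eta) /\
     in_mod2pi (T 1%nat l th_eta - theta_eta_l l th_eta)
       (theta_q q - PI) (PI - theta_q q)) /\
    (Derive (fun s => ln (rho s)) (T 2%nat l th_eta)
       = hq q (T 2%nat l th_eta - theta_eta_l l th_eta) /\
     in_mod2pi (T 2%nat l th_eta - theta_eta_l l th_eta)
       (PI - theta_q q) (PI + theta_q q)).

Definition cexpi (a : R) : C := (cos a, sin a).

Definition summand (q : R) (rho : R -> R) (phi : R -> C) (T : nat -> nat -> R -> R)
    (kn : R) (N j l : nat) (th_eta : R) : C :=
  let t := T j l th_eta in
  let txi := t + delta2 l * PI in
  let f := rho t * sin (t - th_eta) in
  Cmult (Cmult (RtoC (f ^ N * Psi_eta q rho th_eta t txi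
                       / sqrt (Rabs (detD2psi q rho th_eta t txi))))
               (phi txi))
        (cexpi (PI * ((-1) ^ l * (1 - (-1) ^ j)) / 4 + kn * psi_eta q rho th_eta t txi)).

Definition sum4 (q : R) (rho : R -> R) (phi : R -> C) (T : nat -> nat -> R -> R)
    (kn : R) (N : nat) (th_eta : R) : C :=
  Cplus (Cplus (summand q rho phi T kn N 1 1 th_eta) (summand q rho phi T kn N 1 2 th_eta))
        (Cplus (summand q rho phi T kn N 2 1 th_eta) (summand q rho phi T kn N 2 2 th_eta)).

(* Main.v *)
Require Import Defs.
From Stdlib Require Import Reals Ratan ZArith Lra Nsatz.
From Coquelicot Require Import Coquelicot.
Open Scope R_scope.

Lemma periodZ {A : Type} (g : R -> A) :
  (forall t, g (t + 2 * PI) = g t) -> forall (m : Z) t, g (t + 2 * PI * IZR m) = g t.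
Proof.
  intros Hg.
  assert (Hn : forall (n : nat) t, g (t + 2 * PI * INR n) = g t).
  { induction n; intros t.
    - simpl. f_equal. ring.
    - rewrite S_INR. replace (t + 2 * PI * (INR n + 1)) with ((t + 2 * PI * INR n) + 2 * PI) by ring.
      rewrite Hg. apply IHn. }
  intros m t. destruct m as [|p|p].
  - simpl. f_equal. ring.
  - replace (IZR (Z.pos p)) with (INR (Pos.to_nat p)) by (rewrite INR_IZR_INZ, positive_nat_Z; reflexivity). apply Hn.
  - replace (IZR (Z.neg p)) with (- INR (Pos.to_nat p)) by (rewrite INR_IZR_INZ, positive_nat_Z, <- opp_IZR; reflexivity).
    rewrite <- (Hn (Pos.to_nat p) (t + 2 * PI * - INR (Pos.to_nat p))).
    f_equal. ring.
Qed.

Lemma sin_Z x m : sin (x + 2 * PI * IZR m) = sin x.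
Proof. apply (periodZ sin). intro t. rewrite sin_plus, sin_2PI, cos_2PI. ring. Qed.
Lemma cos_Z x m : cos (x + 2 * PI * IZR m) = cos x.
Proof. apply (periodZ cos). intro t. rewrite cos_plus, sin_2PI, cos_2PI. ring. Qed.

Lemma Derive_shift (g : R -> R) c :
  (forall t, g (t + c) = g t) -> (forall t, ex_derive g t) ->
  forall x, Derive g (x + c) = Derive g x.
Proof.
  intros Hg Hd x.
  destruct (Hd (x + c)) as [l Hl].
  assert (H : is_derive (fun s => g (s + c)) x l).
  { apply (is_derive_comp g (fun s => s + c) x l 1) in Hl.
    - replace l with (scal 1 l) by (unfold scal; simpl; unfold mult; simpl; ring). exact Hl.
    - auto_derive; auto. }
  apply is_derive_ext with (g := g) in H; [|exact Hg].
  rewrite (is_derive_unique _ _ _ H).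
  now apply is_derive_unique.
Qed.

Lemma strict_incr (g dg : R -> R) x y : x < y ->
  (forall z, x <= z <= y -> is_derive g z (dg z)) ->
  (forall z, x <= z <= y -> 0 < dg z) -> g x < g y.
Proof.
  intros Hxy Hd Hp.
  destruct (MVT_gen g x y dg) as [c [Hc Heq]].
  - intros z Hz. rewrite Rmin_left in Hz by lra. rewrite Rmax_right in Hz by lra.
    apply Hd; lra.
  - intros z Hz. rewrite Rmin_left in Hz by lra. rewrite Rmax_right in Hz by lra.
    apply continuity_pt_filterlim. apply (ex_derive_continuous (K:=R_AbsRing) (V:=R_NormedModule) g). eexists. apply Hd; lra.
  - rewrite Rmin_left in Hc by lra. rewrite Rmax_right in Hc by lra.
    assert (0 < dg c) by (apply Hp; lra).
    assert (0 < dg c * (y - x)) by (apply Rmult_lt_0_compat; lra). lra.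
Qed.

Lemma strict_decr (g dg : R -> R) x y : x < y ->
  (forall z, x <= z <= y -> is_derive g z (dg z)) ->
  (forall z, x <= z <= y -> dg z < 0) -> g y < g x.
Proof.
  intros Hxy Hd Hp.
  assert (- g x < - g y); [|lra].
  apply (strict_incr (fun z => - g z) (fun z => - dg z)); auto.
  - intros z Hz. apply (is_derive_opp g). auto.
  - intros z Hz. specialize (Hp z Hz). lra.
Qed.

Section Rho.
Variable rho : R -> R.
Hypothesis Hpos : forall t, 0 < rho t.
Hypothesis Hd1 : forall t, ex_derive rho t.
Hypothesis Hd2 : forall t, ex_derive (Derive rho) t.
Ltac eta_fix := try change (fun x0 : R => rho x0) with rho; try change (fun x0 : R => Derive rho x0) with (Derive rho).

Lemma L_eq x : Derive (fun s => ln (rho s)) x = Derive rho x / rho x.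
Proof.
  apply is_derive_unique. auto_derive.
  - repeat split; auto.
  - eta_fix. field. specialize (Hpos x). lra.
Qed.

Lemma L_ex x : ex_derive (Derive (fun s => ln (rho s))) x.
Proof.
  apply ex_derive_ext with (f := fun s => Derive rho s / rho s).
  - intro t. now rewrite L_eq.
  - auto_derive. repeat split; auto. specialize (Hpos x). lra.
Qed.

Lemma L2_eq x : Derive_n (fun s => ln (rho s)) 2 x =
  (Derive (Derive rho) x * rho x - Derive rho x ^ 2) / rho x ^ 2.
Proof.
  change (Derive (Derive (fun s => ln (rho s))) x = (Derive (Derive rho) x * rho x - Derive rho x ^ 2) / rho x ^ 2).
  rewrite (Derive_ext _ (fun s => Derive rho s / rho s)) by (intro t; now rewrite L_eq).
  apply is_derive_unique. auto_derive.
  - repeat split; auto. specialize (Hpos x). lra.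
  - eta_fix. field. specialize (Hpos x). lra.
Qed.

Lemma L_is_derive x : is_derive (Derive (fun s => ln (rho s))) x (Derive_n (fun s => ln (rho s)) 2 x).
Proof.
  change (is_derive (Derive (fun s => ln (rho s))) x (Derive (Derive (fun s => ln (rho s))) x)).
  apply Derive_correct. apply L_ex.
Qed.

Lemma yc1 x : Derive (fun s => rho s * cos s) x = Derive rho x * cos x - rho x * sin x.
Proof. apply is_derive_unique. auto_derive; auto. eta_fix. ring. Qed.
Lemma ys1 x : Derive (fun s => rho s * sin s) x = Derive rho x * sin x + rho x * cos x.
Proof. apply is_derive_unique. auto_derive; auto. eta_fix. ring. Qed.

Lemma yc2 x : Derive_n (fun s => rho s * cos s) 2 x =
  Derive (Derive rho) x * cos x - 2 * Derive rho x * sin x - rho x * cos x.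
Proof.
  change (Derive (Derive (fun s => rho s * cos s)) x = Derive (Derive rho) x * cos x - 2 * Derive rho x * sin x - rho x * cos x).
  rewrite (Derive_ext _ (fun s => Derive rho s * cos s - rho s * sin s)) by (intro t; now rewrite yc1).
  apply is_derive_unique. auto_derive.
  - repeat split; auto.
  - eta_fix. ring.
Qed.
Lemma ys2 x : Derive_n (fun s => rho s * sin s) 2 x =
  Derive (Derive rho) x * sin x + 2 * Derive rho x * cos x - rho x * sin x.
Proof.
  change (Derive (Derive (fun s => rho s * sin s)) x = Derive (Derive rho) x * sin x + 2 * Derive rho x * cos x - rho x * sin x).
  rewrite (Derive_ext _ (fun s => Derive rho s * sin s + rho s * cos s)) by (intro t; now rewrite ys1).
  apply is_derive_unique. auto_derive.
  - repeat split; auto.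
  - eta_fix. ring.
Qed.
End Rho.

Section Q.
Variable q : R.
Hypothesis Hq : 1 < q.

Lemma sq_gt1 : 1 < sqrt q.
Proof. rewrite <- sqrt_1. apply sqrt_lt_1; lra. Qed.
Lemma sq_sq : sqrt q * sqrt q = q.
Proof. apply sqrt_sqrt; lra. Qed.

Lemma thq_cos : cos (theta_q q) = 1 / sqrt q.
Proof.
  unfold theta_q. pose proof sq_gt1. apply cos_acos.
  split; [apply Rle_trans with 0; [lra|]; left; apply Rdiv_lt_0_compat; lra|].
  apply Rmult_le_reg_r with (sqrt q); [lra|]. field_simplify; lra.
Qed.

Lemma thq_bound : 0 < theta_q q < PI / 2.
Proof.
  pose proof sq_gt1 as H1.
  assert (Hc : 0 < 1 / sqrt q < 1).
  { split; [apply Rdiv_lt_0_compat; lra|].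
    apply Rmult_lt_reg_r with (sqrt q); [lra|]. field_simplify; lra. }
  pose proof (acos_bound_lt (1 / sqrt q) ltac:(lra)) as Hb.
  unfold theta_q. split; [lra|].
  destruct (Rlt_or_le (acos (1 / sqrt q)) (PI / 2)) as [h|h]; auto.
  exfalso. pose proof (cos_le_0 (acos (1 / sqrt q)) h ltac:(lra)).
  rewrite cos_acos in H by lra. lra.
Qed.

Lemma Branch1 t : theta_q q - PI < t < PI - theta_q q -> 0 < sqrt q * cos t + 1.
Proof.
  intros Ht. pose proof thq_bound. pose proof sq_gt1.
  assert (Hc : - (1 / sqrt q) < cos t).
  { rewrite <- thq_cos, <- Rtrigo_facts.cos_pi_minus.
    destruct (Rle_or_lt 0 t).
    - apply cos_decreasing_1; lra.
    - rewrite <- (cos_neg t). apply cos_decreasing_1; lra. }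
  apply Rmult_lt_compat_l with (r := sqrt q) in Hc; [|lra].
  replace (sqrt q * - (1 / sqrt q)) with (-1) in Hc by (field; lra). lra.
Qed.

Lemma Branch2 t : PI - theta_q q < t < PI + theta_q q -> sqrt q * cos t + 1 < 0.
Proof.
  intros Ht. pose proof thq_bound. pose proof sq_gt1.
  assert (Hc : cos t < - (1 / sqrt q)).
  { rewrite <- thq_cos, <- Rtrigo_facts.cos_pi_minus.
    destruct (Rle_or_lt t PI).
    - apply cos_decreasing_1; lra.
    - replace t with (- (2 * PI - t) + 2 * PI) by ring.
      rewrite cos_plus, cos_2PI, sin_2PI, cos_neg.
      replace (cos (2 * PI - t) * 1 - sin (- (2 * PI - t)) * 0) with (cos (2 * PI - t)) by ring.
      apply cos_decreasing_1; lra. }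
  apply Rmult_lt_compat_l with (r := sqrt q) in Hc; [|lra].
  replace (sqrt q * - (1 / sqrt q)) with (-1) in Hc by (field; lra). lra.
Qed.

Lemma Branch3 t : - theta_q q < t < theta_q q -> 1 < sqrt q * cos t.
Proof.
  intros Ht. pose proof thq_bound. pose proof sq_gt1.
  assert (Hc : 1 / sqrt q < cos t).
  { rewrite <- thq_cos.
    destruct (Rle_or_lt 0 t).
    - apply cos_decreasing_1; lra.
    - rewrite <- (cos_neg t). apply cos_decreasing_1; lra. }
  apply Rmult_lt_compat_l with (r := sqrt q) in Hc; [|lra].
  replace (sqrt q * (1 / sqrt q)) with 1 in Hc by (field; lra). lra.
Qed.

Lemma X_ge c : -1 <= c <= 1 -> sqrt q * c + 1 <> 0 ->
  sqrt q / (1 + sqrt q) <= sqrt q * (sqrt q + c) / (sqrt q * c + 1) ^ 2.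
Proof.
  intros Hc HP. pose proof sq_gt1.
  assert (HP2 : 0 < (sqrt q * c + 1) ^ 2) by (apply pow2_gt_0; auto).
  unfold Rdiv. apply Rmult_le_reg_r with ((1 + sqrt q) * (sqrt q * c + 1) ^ 2).
  { apply Rmult_lt_0_compat; lra. }
  replace (sqrt q * / (1 + sqrt q) * ((1 + sqrt q) * (sqrt q * c + 1) ^ 2))
    with (sqrt q * (sqrt q * c + 1) ^ 2) by (field; lra).
  replace (sqrt q * (sqrt q + c) * / (sqrt q * c + 1) ^ 2 * ((1 + sqrt q) * (sqrt q * c + 1) ^ 2))
    with (sqrt q * ((sqrt q + c) * (1 + sqrt q))) by (field; lra).
  apply Rmult_le_compat_l; [lra|].
  assert (0 <= (1 - c) * ((sqrt q * sqrt q) * (1 + c) + sqrt q - 1)).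
  { apply Rmult_le_pos; [lra|]. assert (0 <= sqrt q * sqrt q * (1 + c)) by (apply Rmult_le_pos; nra). lra. }
  nra.
Qed.

Lemma hq_derive th0 z : sqrt q * cos (z - th0) + 1 <> 0 ->
  is_derive (fun th => hq q (th - th0)) z
    (sqrt q * (sqrt q + cos (z - th0)) / (sqrt q * cos (z - th0) + 1) ^ 2).
Proof.
  intros HP. unfold hq. auto_derive.
  - auto.
  - change (z + - th0) with (z - th0).
    pose proof (sin2_cos2 (z - th0)) as Hsc. unfold Rsqr in Hsc.
    set (c := cos (z - th0)) in *. set (s := sin (z - th0)) in *.
    replace (sqrt q * (sqrt q + c)) with (sqrt q * c * (sqrt q * c + 1) + sqrt q * sqrt q * (s*s))
      by (replace (s*s) with (1 - c*c) by lra; ring).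
    field; auto.
Qed.
End Q.

Lemma detid (sq rho r r2 cT sT ct st ce se cx sx eps P : R) :
  eps*eps = 1 -> cT*cT+sT*sT = 1 -> ct*ct+st*st=1 ->
  cx = eps*cT -> sx = eps*sT -> ce = eps*(cT*ct+sT*st) -> se = eps*(sT*ct-cT*st) ->
  P = sq*ct+1 -> r*P = rho*sq*st ->
  (((sq*ce + cx)*(r2*cT - 2*r*sT - rho*cT) + (sq*se + sx)*(r2*sT + 2*r*cT - rho*sT)) *
  (-(cx*(rho*cT) + sx*(rho*sT))) -
  (-sx*(r*cT - rho*sT) + cx*(r*sT + rho*cT)) * (-sx*(r*cT - rho*sT) + cx*(r*sT + rho*cT))) * P
  = -(P*P)*(r2*rho - r*r) + rho*rho*sq*(sq+ct).
Proof. intros. subst cx sx ce se P. nsatz. Qed.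

Lemma psiid (sq rho r cT sT ct st ce se cx sx eps P : R) :
  eps*eps = 1 -> cT*cT+sT*sT = 1 -> ct*ct+st*st=1 ->
  cx = eps*cT -> sx = eps*sT -> ce = eps*(cT*ct+sT*st) -> se = eps*(sT*ct-cT*st) ->
  P = sq*ct+1 -> r*P = rho*sq*st ->
  (- ((sq*ce - cx)*(-(r*sT + rho*cT)) + (sq*se - sx)*(r*cT - rho*sT)))*P = eps*rho*(sq*sq-1).
Proof. intros. subst cx sx ce se P. nsatz. Qed.

Lemma stat_nz q rho e T l :
  1 < q -> (forall t, 0 < rho t) -> (forall t, ex_derive rho t) ->
  (forall t, ex_derive (Derive rho) t) ->
  (forall t, Derive_n (fun s => ln (rho s)) 2 t < sqrt q / (1 + sqrt q)) ->
  (l = 1%nat \/ l = 2%nat) ->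
  Derive (fun s => ln (rho s)) T = hq q (T - theta_eta_l l e) ->
  sqrt q * cos (T - theta_eta_l l e) + 1 <> 0 ->
  Psi_eta q rho e T (T + delta2 l * PI) <> 0 /\ detD2psi q rho e T (T + delta2 l * PI) <> 0.
Proof.
  intros Hq Hpos Hd1 Hd2 Hcurv Hl HL HP.
  pose proof (sq_gt1 q Hq) as Hsq.
  set (t := T - theta_eta_l l e) in *.
  set (eps := if Nat.eqb l 2 then -1 else 1).
  assert (Heps : eps * eps = 1) by (unfold eps; destruct (Nat.eqb l 2); ring).
  assert (Hcx : cos (T + delta2 l * PI) = eps * cos T /\ sin (T + delta2 l * PI) = eps * sin T).
  { unfold eps, delta2. destruct Hl as [-> | ->]; simpl.
    - rewrite Rmult_0_l, Rplus_0_r. split; ring.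
    - rewrite Rmult_1_l, neg_cos, neg_sin. split; ring. }
  assert (Hce : cos e = eps * (cos T * cos t + sin T * sin t) /\ sin e = eps * (sin T * cos t - cos T * sin t)).
  { unfold t, eps, theta_eta_l, delta2. destruct Hl as [-> | ->]; simpl.
    - replace (T - (e + 0 * PI)) with (T - e) by ring.
      rewrite <- cos_minus, <- sin_minus. replace (T - (T - e)) with e by ring. split; ring.
    - replace (T - (e + 1 * PI)) with ((T - e) + - PI) by ring.
      rewrite <- cos_minus, <- sin_minus. replace (T - (T - e + - PI)) with (e + PI) by ring.
      rewrite neg_cos, neg_sin. split; ring. }
  destruct Hcx as [Hcx Hsx]. destruct Hce as [Hce Hse].
  rewrite (L_eq rho Hpos Hd1) in HL.
  specialize (Hcurv T). rewrite (L2_eq rho Hpos Hd1 Hd2) in Hcurv.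
  pose proof (X_ge q Hq (cos t) (COS_bound t) HP) as HX.
  set (P := sqrt q * cos t + 1) in *.
  assert (HrP : Derive rho T * P = rho T * sqrt q * sin t).
  { unfold hq in HL. fold t in HL. fold P in HL. specialize (Hpos T).
    apply (Rmult_eq_reg_r (/ rho T * / P)). 2: { apply Rmult_integral_contrapositive; split; apply Rinv_neq_0_compat; lra. }
    replace (Derive rho T * P * (/ rho T * / P)) with (Derive rho T / rho T) by (field; lra).
    rewrite HL. field. lra. }
  pose proof (sin2_cos2 T) as HT. pose proof (sin2_cos2 t) as Ht. unfold Rsqr in HT, Ht.
  assert (HT' : cos T * cos T + sin T * sin T = 1) by lra.
  assert (Ht' : cos t * cos t + sin t * sin t = 1) by lra.
  pose proof (Hpos T) as HpT.
  split.
  - unfold Psi_eta, dot, vsub, vscal, perp, unitv, ycurve'. cbn [fst snd].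
    rewrite (yc1 rho Hd1), (ys1 rho Hd1).
    pose proof (psiid (sqrt q) (rho T) (Derive rho T) (cos T) (sin T) (cos t) (sin t) (cos e) (sin e)
      (cos (T + delta2 l * PI)) (sin (T + delta2 l * PI)) eps P Heps HT' Ht' Hcx Hsx Hce Hse eq_refl HrP) as H.
    intro H0. rewrite H0, Rmult_0_l in H.
    assert (eps <> 0) by (intro; subst; nra).
    assert (sqrt q * sqrt q - 1 <> 0) by nra.
    symmetry in H. apply Rmult_integral in H as [H|H]; [apply Rmult_integral in H as [H|H]|]; lra.
  - unfold detD2psi, dot, vadd, vscal, perp, unitv, ycurve', ycurve'', ycurve. cbn [fst snd].
    rewrite (yc1 rho Hd1), (ys1 rho Hd1), (yc2 rho Hd1 Hd2), (ys2 rho Hd1 Hd2).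
    pose proof (detid (sqrt q) (rho T) (Derive rho T) (Derive (Derive rho) T) (cos T) (sin T) (cos t) (sin t) (cos e) (sin e)
      (cos (T + delta2 l * PI)) (sin (T + delta2 l * PI)) eps P Heps HT' Ht' Hcx Hsx Hce Hse eq_refl HrP) as H.
    intro H0.
    match type of H with (?D * P = _) => assert (HD : D = 0) by (rewrite <- H0; ring) end.
    rewrite HD, Rmult_0_l in H.
    assert (HP2 : 0 < P * P) by (apply Rsqr_pos_lt; auto).
    assert (Hlt : (Derive (Derive rho) T * rho T - Derive rho T ^ 2) / rho T ^ 2 < sqrt q * (sqrt q + cos t) / P ^ 2) by lra.
    apply (Rmult_lt_compat_r (rho T ^ 2 * P ^ 2)) in Hlt; [|apply Rmult_lt_0_compat; apply pow2_gt_0; lra].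
    replace ((Derive (Derive rho) T * rho T - Derive rho T ^ 2) / rho T ^ 2 * (rho T ^ 2 * P ^ 2))
      with ((Derive (Derive rho) T * rho T - Derive rho T ^ 2) * P ^ 2) in Hlt by (field; lra).
    replace (sqrt q * (sqrt q + cos t) / P ^ 2 * (rho T ^ 2 * P ^ 2))
      with (sqrt q * (sqrt q + cos t) * rho T ^ 2) in Hlt by (field; lra).
    nra.
Qed.

Section Branch.
Variable q : R.
Variable rho : R -> R.
Hypothesis Hq : 1 < q.
Hypothesis Hpos : forall t, 0 < rho t.
Hypothesis Hper : forall t, rho (t + 2 * PI) = rho t.
Hypothesis Hd1 : forall t, ex_derive rho t.
Hypothesis Hd2 : forall t, ex_derive (Derive rho) t.
Hypothesis Hcurv : forall t, Derive_n (fun s => ln (rho s)) 2 t < sqrt q / (1 + sqrt q).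

Definition Lf := Derive (fun s => ln (rho s)).
Definition G (th0 th : R) := Lf th - hq q (th - th0).

Lemma rho_Z x m : rho (x + 2 * PI * IZR m) = rho x.
Proof. apply (periodZ rho Hper). Qed.

Lemma Lf_Z x m : Lf (x + 2 * PI * IZR m) = Lf x.
Proof.
  unfold Lf. apply Derive_shift.
  - intro t. now rewrite rho_Z.
  - intro t. auto_derive. split; auto.
Qed.

Lemma hq_Z x m : hq q (x + 2 * PI * IZR m) = hq q x.
Proof. unfold hq. now rewrite sin_Z, cos_Z. Qed.

Lemma G_decr th0 x y : x < y ->
  (forall z, x <= z <= y -> sqrt q * cos (z - th0) + 1 <> 0) -> G th0 y < G th0 x.
Proof.
  intros Hxy HP.
  apply (strict_decr (G th0) (fun z => Derive_n (fun s => ln (rho s)) 2 z -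
     sqrt q * (sqrt q + cos (z - th0)) / (sqrt q * cos (z - th0) + 1) ^ 2)); auto.
  - intros z Hz. unfold G. apply (is_derive_minus Lf (fun th => hq q (th - th0))).
    + apply (L_is_derive rho Hpos Hd1 Hd2).
    + apply hq_derive; auto.
  - intros z Hz. pose proof (X_ge q Hq (cos (z - th0)) (COS_bound _) (HP z Hz)).
    specialize (Hcurv z). lra.
Qed.

Lemma G_uniq th0 a b x y :
  (forall z, a < z - th0 < b -> sqrt q * cos (z - th0) + 1 <> 0) ->
  a < x - th0 < b -> a < y - th0 < b -> G th0 x = 0 -> G th0 y = 0 -> x = y.
Proof.
  intros HP Hx Hy Gx Gy.
  destruct (Rtotal_order x y) as [h|[h|h]]; auto; exfalso.
  - pose proof (G_decr th0 x y h ltac:(intros z Hz; apply HP; lra)). lra.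
  - pose proof (G_decr th0 y x h ltac:(intros z Hz; apply HP; lra)). lra.
Qed.

Lemma reduce T th0 a b :
  in_mod2pi (T - th0) a b -> Lf T = hq q (T - th0) ->
  exists m, a < (T - 2 * PI * IZR m) - th0 < b /\ G th0 (T - 2 * PI * IZR m) = 0.
Proof.
  intros [m Hm] HL. exists m. split; [lra|].
  unfold G. replace (T - 2 * PI * IZR m) with (T + 2 * PI * IZR (- m)) by (rewrite opp_IZR; ring).
  rewrite Lf_Z. replace (T + 2 * PI * IZR (- m) - th0) with ((T - th0) + 2 * PI * IZR (- m)) by ring.
  rewrite hq_Z. lra.
Qed.

Lemma hq_0 : hq q 0 = 0.
Proof. unfold hq. rewrite sin_0. unfold Rdiv. ring. Qed.
Lemma hq_PI : hq q PI = 0.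
Proof. unfold hq. rewrite sin_PI. unfold Rdiv. ring. Qed.
Lemma hq_mPI : hq q (- PI) = 0.
Proof. unfold hq. rewrite sin_neg, sin_PI. unfold Rdiv. ring. Qed.

End Branch.

Section R.
Variable q : R.
Variable rho : R -> R.
Hypothesis Hq : 1 < q.
Hypothesis Hpos : forall t, 0 < rho t.
Hypothesis Hper : forall t, rho (t + 2 * PI) = rho t.
Hypothesis Hd1 : forall t, ex_derive rho t.
Hypothesis Hd2 : forall t, ex_derive (Derive rho) t.
Hypothesis Hcurv : forall t, Derive_n (fun s => ln (rho s)) 2 t < sqrt q / (1 + sqrt q).

Lemma Lf_eq x : Lf rho x = Derive rho x / rho x.
Proof. unfold Lf. apply L_eq; auto. Qed.

Lemma Res1 e T : Derive rho (e + PI) = 0 ->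
  in_mod2pi (T - (e + PI)) (theta_q q - PI) (PI - theta_q q) ->
  Lf rho T = hq q (T - (e + PI)) -> exists m, T = e + PI + 2 * PI * IZR m.
Proof.
  intros H0 Hin HL. pose proof (thq_bound q Hq).
  destruct (reduce q rho Hpos Hper Hd1 T (e + PI) _ _ Hin HL) as [m [Hm HG]].
  exists m.
  assert (T - 2 * PI * IZR m = e + PI); [|lra].
  apply (G_uniq q rho Hq Hpos Hd1 Hd2 Hcurv (e + PI) (theta_q q - PI) (PI - theta_q q)); auto.
  - intros z Hz. pose proof (Branch1 q Hq _ Hz). lra.
  - lra.
  - unfold G. rewrite Lf_eq, H0. replace (e + PI - (e + PI)) with 0 by ring. rewrite hq_0. unfold Rdiv. ring.
Qed.

Lemma Res2 e T : Derive rho (e + PI) = 0 ->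
  in_mod2pi (T - e) (PI - theta_q q) (PI + theta_q q) ->
  Lf rho T = hq q (T - e) -> exists m, T = e + PI + 2 * PI * IZR m.
Proof.
  intros H0 Hin HL. pose proof (thq_bound q Hq).
  destruct (reduce q rho Hpos Hper Hd1 T e _ _ Hin HL) as [m [Hm HG]].
  exists m.
  assert (T - 2 * PI * IZR m = e + PI); [|lra].
  apply (G_uniq q rho Hq Hpos Hd1 Hd2 Hcurv e (PI - theta_q q) (PI + theta_q q)); auto.
  - intros z Hz. pose proof (Branch2 q Hq _ Hz). lra.
  - lra.
  - unfold G. rewrite Lf_eq, H0. replace (e + PI - e) with PI by ring. rewrite hq_PI. unfold Rdiv. ring.
Qed.

Definition F e th := rho th * sin (th - e).

Lemma F_Z e x m : F e (x + 2 * PI * IZR m) = F e x.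
Proof. unfold F. rewrite rho_Z; auto. replace (x + 2 * PI * IZR m - e) with ((x - e) + 2 * PI * IZR m) by ring.
  now rewrite sin_Z. Qed.

Lemma F_derive e z : is_derive (F e) z (rho z * (Lf rho z * sin (z - e) + cos (z - e))).
Proof.
  rewrite Lf_eq. unfold F. auto_derive.
  - auto.
  - change (fun x0 : R => rho x0) with rho. change (z + - e) with (z - e); field. specialize (Hpos z). lra.
Qed.

Lemma hq_sin_cos u : 0 < sqrt q * cos u + 1 -> 0 < hq q u * sin u + cos u.
Proof.
  intro HP. unfold hq. pose proof (sin2_cos2 u). unfold Rsqr in H. pose proof (sq_gt1 q Hq).
  replace (sqrt q * sin u / (sqrt q * cos u + 1) * sin u + cos u) with
    ((sqrt q + cos u) / (sqrt q * cos u + 1)).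
  - apply Rdiv_lt_0_compat; auto. pose proof (COS_bound u). lra.
  - replace (sqrt q + cos u) with (sqrt q * (sin u * sin u + cos u * cos u) + cos u) by (rewrite H; ring).
    field. lra.
Qed.

Lemma HH s : 0 < s < theta_q q -> 0 < hq q (s - PI) - hq q s.
Proof.
  intros Hs. pose proof (thq_bound q Hq). pose proof (sq_gt1 q Hq).
  pose proof (Branch3 q Hq s ltac:(lra)).
  assert (0 < sin s) by (apply sin_gt_0; lra).
  unfold hq. replace (s - PI) with (s + - PI) by ring.
  rewrite cos_plus, sin_plus, cos_neg, sin_neg, cos_PI, sin_PI.
  replace (sqrt q * (sin s * -1 + cos s * - 0) / (sqrt q * (cos s * -1 - sin s * - 0) + 1) -
    sqrt q * sin s / (sqrt q * cos s + 1)) with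
    (2 * sqrt q * sin s / ((sqrt q * cos s - 1) * (sqrt q * cos s + 1))) by (field; lra).
  apply Rdiv_lt_0_compat; [|apply Rmult_lt_0_compat]; try lra.
  apply Rmult_lt_0_compat; lra.
Qed.

Lemma HH' s : - theta_q q < s < 0 -> hq q (s - PI) - hq q s < 0.
Proof.
  intros Hs. pose proof (thq_bound q Hq). pose proof (sq_gt1 q Hq).
  pose proof (Branch3 q Hq s ltac:(lra)).
  assert (sin s < 0) by (apply sin_lt_0_var; lra).
  unfold hq. replace (s - PI) with (s + - PI) by ring.
  rewrite cos_plus, sin_plus, cos_neg, sin_neg, cos_PI, sin_PI.
  replace (sqrt q * (sin s * -1 + cos s * - 0) / (sqrt q * (cos s * -1 - sin s * - 0) + 1) -
    sqrt q * sin s / (sqrt q * cos s + 1)) with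
    (- (2 * sqrt q * (- sin s)) / ((sqrt q * cos s - 1) * (sqrt q * cos s + 1))) by (field; lra).
  unfold Rdiv. rewrite Ropp_mult_distr_l_reverse. apply Ropp_lt_gt_0_contravar.
  apply Rmult_lt_0_compat; [|apply Rinv_0_lt_compat, Rmult_lt_0_compat]; try lra.
  apply Rmult_lt_0_compat; lra.
Qed.


Lemma Res3 e T1 T2 : Derive rho e <> 0 ->
  in_mod2pi (T1 - e) (theta_q q - PI) (PI - theta_q q) -> Lf rho T1 = hq q (T1 - e) ->
  in_mod2pi (T2 - (e + PI)) (PI - theta_q q) (PI + theta_q q) -> Lf rho T2 = hq q (T2 - (e + PI)) ->
  F e T1 <> F e T2 /\ F e T1 <> 0 /\ F e T2 <> 0.
Proof.
  intros Hr0 Hin1 HL1 Hin2 HL2.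
  pose proof (thq_bound q Hq) as Hth. pose proof (sq_gt1 q Hq) as Hsq.
  destruct (reduce q rho Hpos Hper Hd1 T1 e _ _ Hin1 HL1) as [m1 [Hm1 HG1]].
  destruct (reduce q rho Hpos Hper Hd1 T2 (e + PI) _ _ Hin2 HL2) as [m2 [Hm2 HG2]].
  set (x1 := T1 - 2 * PI * IZR m1) in *.
  set (x2 := T2 - 2 * PI * IZR m2 - 2 * PI).
  assert (HF1 : F e T1 = F e x1).
  { replace T1 with (x1 + 2 * PI * IZR m1) by (unfold x1; ring). apply F_Z. }
  assert (HF2 : F e T2 = F e x2).
  { replace T2 with (x2 + 2 * PI * IZR (m2 + 1)) by (unfold x2; rewrite plus_IZR; ring). apply F_Z. }
  assert (HG2' : G q rho (e + PI) x2 = 0).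
  { unfold G in *. replace x2 with ((T2 - 2 * PI * IZR m2) + 2 * PI * IZR (-1)) by (unfold x2; simpl; ring).
    rewrite (Lf_Z rho Hpos Hper Hd1).
    replace (T2 - 2 * PI * IZR m2 + 2 * PI * IZR (-1) - (e + PI)) with
      ((T2 - 2 * PI * IZR m2 - (e + PI)) + 2 * PI * IZR (-1)) by ring.
    rewrite hq_Z. auto. }
  assert (Hx2 : - theta_q q < x2 - e < theta_q q) by (unfold x2; lra).
  rewrite HF1, HF2. clear HF1 HF2 HG2 Hm2.
  assert (HP2 : forall z, - theta_q q < z - e < theta_q q -> sqrt q * cos (z - (e + PI)) + 1 <> 0).
  { intros z Hz. pose proof (Branch3 q Hq _ Hz).
    replace (z - (e + PI)) with ((z - e) + - PI) by ring.
    rewrite cos_plus, cos_neg, sin_neg, cos_PI, sin_PI. nra. }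
  assert (HP1 : forall z, theta_q q - PI < z - e < PI - theta_q q -> 0 < sqrt q * cos (z - e) + 1).
  { intros z Hz. apply Branch1; auto. }
  assert (HGe : G q rho (e + PI) e = Lf rho e).
  { unfold G. replace (e - (e + PI)) with (- PI) by ring. rewrite hq_mPI. ring. }
  assert (HLe : Lf rho e <> 0).
  { rewrite Lf_eq. specialize (Hpos e). intro h. apply Hr0.
    apply (Rmult_eq_reg_r (/ rho e)); [|apply Rinv_neq_0_compat; lra]. unfold Rdiv in h. lra. }
  assert (HGx2 : G q rho e x2 = hq q ((x2 - e) - PI) - hq q (x2 - e)).
  { unfold G in *. replace (x2 - e - PI) with (x2 - (e + PI)) by ring. lra. }
  assert (HG1z : forall z, theta_q q - PI < z - e < PI - theta_q q -> z < x1 -> 0 < G q rho e z).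
  { intros z Hz Hzx. rewrite <- HG1. apply (G_decr q rho Hq Hpos Hd1 Hd2 Hcurv); auto.
    intros w Hw. apply Rgt_not_eq. apply HP1. lra. }
  assert (HG1z' : forall z, theta_q q - PI < z - e < PI - theta_q q -> x1 < z -> G q rho e z < 0).
  { intros z Hz Hzx. rewrite <- HG1. apply (G_decr q rho Hq Hpos Hd1 Hd2 Hcurv); auto.
    intros w Hw. apply Rgt_not_eq. apply HP1. lra. }
  destruct (Rlt_or_le 0 (Lf rho e)) as [Lp | Ln].
  -
    assert (Hx2e : e < x2).
    { destruct (Rtotal_order e x2) as [h|[h|h]]; auto; exfalso.
      - rewrite <- h in HG2'. lra.
      - pose proof (G_decr q rho Hq Hpos Hd1 Hd2 Hcurv (e + PI) x2 e h
          ltac:(intros z Hz; apply HP2; lra)). lra. }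
    assert (HG1x2 : 0 < G q rho e x2) by (rewrite HGx2; apply HH; lra).
    assert (Hx12 : x2 < x1).
    { destruct (Rtotal_order x2 x1) as [h|[h|h]]; auto; exfalso.
      - rewrite h in HG1x2. lra.
      - pose proof (HG1z' x2 ltac:(lra) h). lra. }
    assert (Hinc : F e x2 < F e x1).
    { apply (strict_incr (F e) (fun z => rho z * (Lf rho z * sin (z - e) + cos (z - e)))); auto.
      - intros z Hz. apply F_derive.
      - intros z Hz. apply Rmult_lt_0_compat; auto.
        assert (Hs : 0 < sin (z - e)) by (apply sin_gt_0; lra).
        assert (HGz : 0 <= G q rho e z).
        { destruct (Rle_lt_or_eq_dec z x1 ltac:(lra)) as [h|h].
          - left. apply HG1z; auto. lra.
          - subst z. lra. }
        unfold G in HGz. pose proof (hq_sin_cos (z - e) (HP1 z ltac:(lra))). nra. }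
    assert (0 < F e x2).
    { unfold F. apply Rmult_lt_0_compat; auto. apply sin_gt_0; lra. }
    repeat split; lra.
  - assert (Lneg : Lf rho e < 0) by lra.
    assert (Hx2e : x2 < e).
    { destruct (Rtotal_order x2 e) as [h|[h|h]]; auto; exfalso.
      - rewrite h in HG2'. lra.
      - pose proof (G_decr q rho Hq Hpos Hd1 Hd2 Hcurv (e + PI) e x2 h
          ltac:(intros z Hz; apply HP2; lra)). lra. }
    assert (HG1x2 : G q rho e x2 < 0) by (rewrite HGx2; apply HH'; lra).
    assert (Hx12 : x1 < x2).
    { destruct (Rtotal_order x1 x2) as [h|[h|h]]; auto; exfalso.
      - rewrite <- h in HG1x2. lra.
      - pose proof (HG1z x2 ltac:(lra) h). lra. }
    assert (Hinc : F e x1 < F e x2).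
    { apply (strict_incr (F e) (fun z => rho z * (Lf rho z * sin (z - e) + cos (z - e)))); auto.
      - intros z Hz. apply F_derive.
      - intros z Hz. apply Rmult_lt_0_compat; auto.
        assert (Hs : sin (z - e) < 0) by (apply sin_lt_0_var; lra).
        assert (HGz : G q rho e z <= 0).
        { destruct (Rle_lt_or_eq_dec x1 z ltac:(lra)) as [h|h].
          - left. apply HG1z'; auto. lra.
          - subst z. lra. }
        unfold G in HGz. pose proof (hq_sin_cos (z - e) (HP1 z ltac:(lra))). nra. }
    assert (F e x2 < 0).
    { unfold F. assert (sin (x2 - e) < 0) by (apply sin_lt_0_var; lra).
      specialize (Hpos x2). nra. }
    repeat split; lra.
Qed.

End R.

Definition Wt (q : R) (rho : R -> R) (phi : R -> C) (T : nat -> nat -> R -> R)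
    (kn : R) (j l : nat) (th_eta : R) : C :=
  let t := T j l th_eta in
  let txi := t + delta2 l * PI in
  Cmult (Cmult (RtoC (Psi_eta q rho th_eta t txi / sqrt (Rabs (detD2psi q rho th_eta t txi))))
               (phi txi))
        (cexpi (PI * ((-1) ^ l * (1 - (-1) ^ j)) / 4 + kn * psi_eta q rho th_eta t txi)).

Lemma summand_split q rho phi T kn N j l e :
  summand q rho phi T kn N j l e =
  Cmult (RtoC ((rho (T j l e) * sin (T j l e - e)) ^ N)) (Wt q rho phi T kn j l e).
Proof.
  unfold summand, Wt. cbv zeta.
  apply injective_projections; simpl; unfold Rdiv; ring.
Qed.

Lemma Cmod_cexpi a : Cmod (cexpi a) = 1.
Proof. unfold Cmod, cexpi. cbn [fst snd].
  replace (cos a ^ 2 + sin a ^ 2) with 1 by (rewrite <- (sin2_cos2 a); unfold Rsqr; ring).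
  apply sqrt_1. Qed.

Lemma Wt_mod q rho phi T kn j l e :
  Cmod (Wt q rho phi T kn j l e) =
  Rabs (Psi_eta q rho e (T j l e) (T j l e + delta2 l * PI) /
        sqrt (Rabs (detD2psi q rho e (T j l e) (T j l e + delta2 l * PI)))) *
  Cmod (phi (T j l e + delta2 l * PI)).
Proof. unfold Wt. cbv zeta. rewrite !Cmod_mult, Cmod_cexpi, Cmod_R. ring. Qed.

Lemma lim_le0 K (v : nat -> R) : (forall n, K <= v n) -> is_lim_seq v 0 -> K <= 0.
Proof.
  intros H Hv. pose proof (is_lim_seq_le (fun _ => K) v K 0 H (is_lim_seq_const K) Hv). simpl in H0. auto.
Qed.

Lemma lim_comb (b : R) (u v : nat -> R) : is_lim_seq u 0 -> is_lim_seq v 0 ->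
  is_lim_seq (fun n => b * u n + v n) 0.
Proof.
  intros Hu Hv. replace 0 with (b * 0 + 0) by ring.
  apply is_lim_seq_plus'; auto.
  pose proof (is_lim_seq_scal_l u b 0 Hu). simpl in H. auto.
Qed.

Lemma comb (a b : R) (w1 w2 : C) :
  Cmod (Cmult (RtoC (a * (b - a))) w1) <=
  Rabs b * Cmod (Cplus (Cmult (RtoC (a ^ 1)) w1) (Cmult (RtoC (b ^ 1)) w2)) +
  Cmod (Cplus (Cmult (RtoC (a ^ 2)) w1) (Cmult (RtoC (b ^ 2)) w2)).
Proof.
  set (S1 := Cplus (Cmult (RtoC (a ^ 1)) w1) (Cmult (RtoC (b ^ 1)) w2)).
  set (S2 := Cplus (Cmult (RtoC (a ^ 2)) w1) (Cmult (RtoC (b ^ 2)) w2)).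
  replace (Cmult (RtoC (a * (b - a))) w1) with (Cplus (Cmult (RtoC b) S1) (Copp S2)).
  - eapply Rle_trans; [apply Cmod_triangle|]. rewrite Cmod_opp, Cmod_mult, Cmod_R. lra.
  - unfold S1, S2. apply injective_projections; simpl; ring.
Qed.

Lemma comb' (a b : R) (w1 w2 : C) :
  Cmod (Cmult (RtoC (b * (a - b))) w2) <=
  Rabs a * Cmod (Cplus (Cmult (RtoC (a ^ 1)) w1) (Cmult (RtoC (b ^ 1)) w2)) +
  Cmod (Cplus (Cmult (RtoC (a ^ 2)) w1) (Cmult (RtoC (b ^ 2)) w2)).
Proof.
  set (S1 := Cplus (Cmult (RtoC (a ^ 1)) w1) (Cmult (RtoC (b ^ 1)) w2)).
  set (S2 := Cplus (Cmult (RtoC (a ^ 2)) w1) (Cmult (RtoC (b ^ 2)) w2)).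
  replace (Cmult (RtoC (b * (a - b))) w2) with (Cplus (Cmult (RtoC a) S1) (Copp S2)).
  - eapply Rle_trans; [apply Cmod_triangle|]. rewrite Cmod_opp, Cmod_mult, Cmod_R. lra.
  - unfold S1, S2. apply injective_projections; simpl; ring.
Qed.

Lemma diff_mod (w1 w2 : C) : Rabs (Cmod w1 - Cmod w2) <= Cmod (Cplus w1 w2).
Proof.
  assert (H1 : Cmod w1 <= Cmod (Cplus w1 w2) + Cmod w2).
  { replace w1 with (Cplus (Cplus w1 w2) (Copp w2)) at 1 by (apply injective_projections; simpl; ring).
    rewrite <- (Cmod_opp w2). apply Cmod_triangle. }
  assert (H2 : Cmod w2 <= Cmod (Cplus w1 w2) + Cmod w1).
  { replace w2 with (Cplus (Cplus w1 w2) (Copp w1)) at 1 by (apply injective_projections; simpl; ring).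
    rewrite <- (Cmod_opp w1). apply Cmod_triangle. }
  apply Rabs_le. lra.
Qed.

Lemma coef_nz a d : a <> 0 -> d <> 0 -> a / sqrt (Rabs d) <> 0.
Proof.
  intros Ha Hd. assert (0 < sqrt (Rabs d)) by (apply sqrt_lt_R0; apply Rabs_pos_lt; auto).
  unfold Rdiv. apply Rmult_integral_contrapositive; split; auto. apply Rinv_neq_0_compat. lra.
Qed.

Lemma inmod_P1 q x : 1 < q -> in_mod2pi x (theta_q q - PI) (PI - theta_q q) -> sqrt q * cos x + 1 <> 0.
Proof.
  intros Hq [m Hm]. pose proof (Branch1 q Hq _ Hm).
  replace x with ((x - 2 * PI * IZR m) + 2 * PI * IZR m) by ring. rewrite cos_Z. lra.
Qed.
Lemma inmod_P2 q x : 1 < q -> in_mod2pi x (PI - theta_q q) (PI + theta_q q) -> sqrt q * cos x + 1 <> 0.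
Proof.
  intros Hq [m Hm]. pose proof (Branch2 q Hq _ Hm).
  replace x with ((x - 2 * PI * IZR m) + 2 * PI * IZR m) by ring. rewrite cos_Z. lra.
Qed.

Lemma mult_pos_zero A X : 0 < A -> A * X = 0 -> X = 0.
Proof. intros HA H. apply Rmult_integral in H as [h|h]; auto. lra. Qed.

Lemma pos_le0 A B X : 0 < A -> 0 < B -> 0 <= X -> A * (B * X) <= 0 -> X = 0.
Proof.
  intros HA HB HX H. destruct (Rle_lt_or_eq_dec 0 X HX) as [h|h]; [|auto].
  assert (0 < A * (B * X)) by (repeat apply Rmult_lt_0_compat; auto). lra.
Qed.

Theorem corollary3 (q : R) (rho : R -> R) (phi : R -> C) (T : nat -> nat -> R -> R)
    (k : nat -> R) (th_eta : R) :
  1 < q ->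
  (forall t, 0 < rho t) ->
  (forall t, rho (t + 2 * PI) = rho t) ->
  (forall t, ex_derive rho t) ->
  (forall t, ex_derive (Derive rho) t) ->
  (forall t, continuous (Derive_n rho 2) t) ->
  (forall t, Derive_n (fun s => ln (rho s)) 2 t < sqrt q / (1 + sqrt q)) ->
  (forall t, phi (t + 2 * PI) = phi t) ->
  (forall t, continuous phi t) ->
  is_T q rho T ->
  (forall n, 0 < k n) ->
  is_lim_seq k p_infty ->
  (forall (th : R) (N : nat),
      is_lim_seq (fun n => Cmod (sum4 q rho phi T (k n) N th)) 0) ->
  Derive rho (th_eta + PI) = 0 ->
  Derive rho th_eta <> 0 ->
  phi (T 1%nat 1%nat th_eta) = 0 /\ phi (T 2%nat 2%nat th_eta + PI) = 0 /\
  (phi th_eta = 0 <-> phi (th_eta + PI) = 0).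
Proof.
  intros Hq Hpos Hper Hd1 Hd2 _ Hcurv Hphiper _ HT _ _ Hlim Hr0 Hr1.
  set (e := th_eta) in *.
  assert (th1 : theta_eta_l 1 e = e) by (unfold theta_eta_l, delta2; simpl; ring).
  assert (th2 : theta_eta_l 2 e = e + PI) by (unfold theta_eta_l, delta2; simpl; ring).
  assert (d1 : delta2 1 = 0) by reflexivity.
  assert (d2 : delta2 2 = 1) by reflexivity.
  destruct (HT e 1%nat (or_introl eq_refl)) as [[HL11 Hin11] [HL21 Hin21]].
  destruct (HT e 2%nat (or_intror eq_refl)) as [[HL12 Hin12] [HL22 Hin22]].
  pose proof (stat_nz q rho e (T 1%nat 1%nat e) 1 Hq Hpos Hd1 Hd2 Hcurv (or_introl eq_refl) HL11
     (inmod_P1 q _ Hq Hin11)) as [Ps11 De11].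
  pose proof (stat_nz q rho e (T 2%nat 1%nat e) 1 Hq Hpos Hd1 Hd2 Hcurv (or_introl eq_refl) HL21
     (inmod_P2 q _ Hq Hin21)) as [Ps21 De21].
  pose proof (stat_nz q rho e (T 1%nat 2%nat e) 2 Hq Hpos Hd1 Hd2 Hcurv (or_intror eq_refl) HL12
     (inmod_P1 q _ Hq Hin12)) as [Ps12 De12].
  pose proof (stat_nz q rho e (T 2%nat 2%nat e) 2 Hq Hpos Hd1 Hd2 Hcurv (or_intror eq_refl) HL22
     (inmod_P2 q _ Hq Hin22)) as [Ps22 De22].
  pose proof (coef_nz _ _ Ps11 De11) as C11.
  pose proof (coef_nz _ _ Ps21 De21) as C21.
  pose proof (coef_nz _ _ Ps12 De12) as C12.
  pose proof (coef_nz _ _ Ps22 De22) as C22.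
  rewrite th1 in HL11, Hin11, HL21, Hin21. rewrite th2 in HL12, Hin12, HL22, Hin22.
  destruct (Res1 q rho Hq Hpos Hper Hd1 Hd2 Hcurv e _ Hr0 Hin12 HL12) as [m12 E12].
  destruct (Res2 q rho Hq Hpos Hper Hd1 Hd2 Hcurv e _ Hr0 Hin21 HL21) as [m21 E21].
  destruct (Res3 q rho Hq Hpos Hper Hd1 Hd2 Hcurv e _ _ Hr1 Hin11 HL11 Hin22 HL22) as [Fne [F1nz F2nz]].
  unfold F in Fne, F1nz, F2nz.
  assert (f12 : rho (T 1%nat 2%nat e) * sin (T 1%nat 2%nat e - e) = 0).
  { rewrite E12. replace (e + PI + 2 * PI * IZR m12 - e) with (PI + 2 * PI * IZR m12) by ring.
    rewrite sin_Z, sin_PI. ring. }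
  assert (f21 : rho (T 2%nat 1%nat e) * sin (T 2%nat 1%nat e - e) = 0).
  { rewrite E21. replace (e + PI + 2 * PI * IZR m21 - e) with (PI + 2 * PI * IZR m21) by ring.
    rewrite sin_Z, sin_PI. ring. }
  set (a := rho (T 1%nat 1%nat e) * sin (T 1%nat 1%nat e - e)) in *.
  set (b := rho (T 2%nat 2%nat e) * sin (T 2%nat 2%nat e - e)) in *.
  assert (Hsum : forall N n, N <> 0%nat -> sum4 q rho phi T (k n) N e =
     Cplus (Cmult (RtoC (a ^ N)) (Wt q rho phi T (k n) 1 1 e))
           (Cmult (RtoC (b ^ N)) (Wt q rho phi T (k n) 2 2 e))).
  { intros N n HN. unfold sum4. rewrite !summand_split. fold a b. rewrite f12, f21, pow_ne_zero by auto.
    generalize (Wt q rho phi T (k n) 1 1 e) (Wt q rho phi T (k n) 2 2 e) (Wt q rho phi T (k n) 1 2 e) (Wt q rho phi T (k n) 2 1 e).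
    intros w1 w2 w3 w4.
    apply injective_projections; simpl; ring. }
  assert (Hphi11 : phi (T 1%nat 1%nat e) = 0).
  { apply Cmod_eq_0.
    set (K := Cmod (Cmult (RtoC (a * (b - a))) (Wt q rho phi T (k 0%nat) 1 1 e))).
    assert (HK : K <= 0).
    { apply (lim_le0 K (fun n => Rabs b * Cmod (sum4 q rho phi T (k n) 1 e) + Cmod (sum4 q rho phi T (k n) 2 e))).
      - intro n. rewrite !Hsum by discriminate.
        eapply Rle_trans; [|apply comb]. unfold K. rewrite !Cmod_mult, !Wt_mod. apply Rle_refl.
      - apply lim_comb; apply Hlim. }
    unfold K in HK. rewrite Cmod_mult, Wt_mod, Cmod_R, d1, Rmult_0_l, Rplus_0_r in HK.
    rewrite d1, Rmult_0_l, Rplus_0_r in C11.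
    eapply pos_le0; [| |apply Cmod_ge_0|exact HK].
    - apply Rabs_pos_lt; apply Rmult_integral_contrapositive; split; [auto|apply Rminus_eq_contra; auto].
    - apply Rabs_pos_lt; auto. }
  assert (Hphi22 : phi (T 2%nat 2%nat e + PI) = 0).
  { apply Cmod_eq_0.
    set (K := Cmod (Cmult (RtoC (b * (a - b))) (Wt q rho phi T (k 0%nat) 2 2 e))).
    assert (HK : K <= 0).
    { apply (lim_le0 K (fun n => Rabs a * Cmod (sum4 q rho phi T (k n) 1 e) + Cmod (sum4 q rho phi T (k n) 2 e))).
      - intro n. rewrite !Hsum by discriminate.
        eapply Rle_trans; [|apply comb']. unfold K. rewrite !Cmod_mult, !Wt_mod. apply Rle_refl.
      - apply lim_comb; apply Hlim. }
    unfold K in HK. rewrite Cmod_mult, Wt_mod, Cmod_R, d2, Rmult_1_l in HK.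
    rewrite d2, Rmult_1_l in C22.
    eapply pos_le0; [| |apply Cmod_ge_0|exact HK].
    - apply Rabs_pos_lt; apply Rmult_integral_contrapositive; split; [auto|apply Rminus_eq_contra; auto].
    - apply Rabs_pos_lt; auto. }
  split; [auto|split; [auto|]].
  assert (W11z : forall kn, Wt q rho phi T kn 1 1 e = 0).
  { intro kn. apply Cmod_eq_0. rewrite Wt_mod, d1, Rmult_0_l, Rplus_0_r, Hphi11, Cmod_0. ring. }
  assert (W22z : forall kn, Wt q rho phi T kn 2 2 e = 0).
  { intro kn. apply Cmod_eq_0. rewrite Wt_mod, d2, Rmult_1_l, Hphi22, Cmod_0. ring. }
  assert (Hsum0 : forall n, sum4 q rho phi T (k n) 0 e =
     Cplus (Wt q rho phi T (k n) 1 2 e) (Wt q rho phi T (k n) 2 1 e)).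
  { intro n. unfold sum4. rewrite !summand_split, W11z, W22z.
    generalize (Wt q rho phi T (k n) 1 2 e) (Wt q rho phi T (k n) 2 1 e). intros w1 w2.
    apply injective_projections; simpl; ring. }
  assert (Heq : Cmod (Wt q rho phi T (k 0%nat) 1 2 e) = Cmod (Wt q rho phi T (k 0%nat) 2 1 e)).
  { assert (Rabs (Cmod (Wt q rho phi T (k 0%nat) 1 2 e) - Cmod (Wt q rho phi T (k 0%nat) 2 1 e)) <= 0).
    { apply (lim_le0 _ (fun n => Cmod (sum4 q rho phi T (k n) 0 e))); [|apply Hlim].
      intro n. rewrite Hsum0. rewrite !Wt_mod. rewrite <- (Wt_mod q rho phi T (k n) 1 2 e).
      rewrite <- (Wt_mod q rho phi T (k n) 2 1 e). apply diff_mod. }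
    pose proof (Rabs_pos (Cmod (Wt q rho phi T (k 0%nat) 1 2 e) - Cmod (Wt q rho phi T (k 0%nat) 2 1 e))).
    apply Rminus_diag_uniq. apply Rabs_eq_0. apply Rle_antisym; auto. }
  rewrite !Wt_mod, d1, d2, Rmult_0_l, Rplus_0_r, Rmult_1_l in Heq.
  rewrite d1, Rmult_0_l, Rplus_0_r in C21. rewrite d2, Rmult_1_l in C12.
  assert (Pe : phi (T 1%nat 2%nat e + PI) = phi e).
  { rewrite E12. replace (e + PI + 2 * PI * IZR m12 + PI) with (e + 2 * PI * IZR (m12 + 1)) by (rewrite plus_IZR; ring).
    apply periodZ; auto. }
  assert (Pe' : phi (T 2%nat 1%nat e) = phi (e + PI)).
  { rewrite E21. apply periodZ; auto. }
  rewrite Pe, Pe' in Heq.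
  pose proof (Rabs_pos_lt _ C12). pose proof (Rabs_pos_lt _ C21).
  split; intro Hz.
  - apply Cmod_eq_0. rewrite Hz, Cmod_0, Rmult_0_r in Heq.
    symmetry in Heq. eapply mult_pos_zero; [|exact Heq]. auto.
  - apply Cmod_eq_0. rewrite Hz, Cmod_0, Rmult_0_r in Heq.
    eapply mult_pos_zero; [|exact Heq]. auto.
Qed.
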